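(* Let $n\ge 1$ and let $B=\prod_{i=1}^n[a_i,b_i]\subseteq\mathbb{R}^n$ (with $a_i<b_i$) be an $n$-dimensional box, and let $V$ be its set of $2^n$ vertices. Let $0\le k<n$. Then there exists a (non-unique) subset $U\subseteq V$ with $|U|=\sum_{i=0}^k\binom{n}{i}$ such that $\deg(U\to v)=k$ for every $v\in V\setminus U$.
   Context: All polynomials are real polynomials in $n$ variables. For a set $S\subseteq\mathbb{R}^n$ and a point $t\in\mathbb{R}^n$, $\deg(S\to t)$ denotes the maximal integer $k$ such that every polynomial of degree at most $k$ which vanishes on every point of $S$ also vanishes at $t$ (equivalently, the values of any polynomial of degree at most $k$ on $S$ determine its value at $t$). *)

(* Defs.v *)
From HB Require Import structures.
From mathcomp Require Import all_boot all_order all_algebra.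
From mathcomp Require Import reals.
From mathcomp Require Import mpoly.
Set Implicit Arguments. Unset Strict Implicit. Unset Printing Implicit Defensive.
Import Order.TTheory GRing.Theory Num.Theory.
Local Open Scope ring_scope.

(* Every polynomial of total degree at most k vanishing on S vanishes at t.
   (The zero polynomial has msize 0; msize p = 1 + total degree otherwise.) *)
Definition deg_to_ge (R : realType) (n : nat) (S : ('I_n -> R) -> Prop)
    (t : 'I_n -> R) (k : nat) : Prop :=
  forall p : {mpoly R[n]}, (msize p <= k.+1)%N ->
    (forall x, S x -> p.@[x] = 0) -> p.@[t] = 0.

Definition deg_to_eq (R : realType) (n : nat) (S : ('I_n -> R) -> Prop)
    (t : 'I_n -> R) (k : nat) : Prop :=
  deg_to_ge S t k /\ (forall m : nat, deg_to_ge S t m -> (m <= k)%N).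

Definition box_vertex (R : realType) (n : nat) (a b : 'I_n -> R)
    (s : {ffun 'I_n -> bool}) : 'I_n -> R :=
  fun i => if s i then b i else a i.

(* Main.v *)
Require Import Defs.
From HB Require Import structures.
From mathcomp Require Import all_boot all_order all_algebra.
From mathcomp Require Import reals.
From mathcomp Require Import mpoly.
From mathcomp Require Import lra zify.
Import Order.TTheory GRing.Theory Num.Theory.
Local Open Scope ring_scope.
Set Implicit Arguments. Unset Strict Implicit.

Definition xv (R : realType) n (a b : 'I_n -> R) (S : {set 'I_n}) : 'I_n -> R :=
  fun j => if j \in S then b j else a j.

Definition tog n (i : 'I_n) (S : {set 'I_n}) : {set 'I_n} :=
  if i \in S then S :\ i else i |: S.

Lemma togK n (i : 'I_n) : involutive (tog i).
Proof.
move=> S; rewrite /tog; case: (boolP (i \in S)) => iS.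
  by rewrite !inE eqxx /= setD1K.
by rewrite !inE eqxx /= setU1K.
Qed.

Lemma in_tog n (i j : 'I_n) (S : {set 'I_n}) : j != i -> (j \in tog i S) = (j \in S).
Proof. by move=> ji; rewrite /tog; case: ifP => _; rewrite !inE (negPf ji). Qed.

Lemma sign_tog (R : realType) n (i : 'I_n) (S : {set 'I_n}) :
  (-1) ^+ #|tog i S| = - ((-1) ^+ #|S|) :> R.
Proof.
rewrite /tog; case: (boolP (i \in S)) => iS.
  by rewrite [in RHS](cardsD1 i S) iS exprS mulN1r opprK.
by rewrite cardsU1 iS exprS mulN1r.
Qed.

Lemma tog_sub n (i : 'I_n) (S T : {set 'I_n}) : i \in T -> (tog i S \subset T) = (S \subset T).
Proof.
move=> iT; rewrite /tog; case: (boolP (i \in S)) => iS.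
  apply/idP/idP => H; last by apply: subset_trans H; apply: subsetDl.
  by rewrite -(setD1K iS) subUset sub1set iT.
by rewrite subUset sub1set iT.
Qed.

Lemma pair_zero (R : realType) n (i : 'I_n) (T : {set 'I_n}) (h : {set 'I_n} -> R) :
  i \in T -> (forall S, h (tog i S) = - h S) ->
  \sum_(S in powerset T) h S = 0.
Proof.
move=> iT hN.
have E : \sum_(S in powerset T) h S = \sum_(S in powerset T) h (tog i S).
  rewrite (reindex_inj (can_inj (togK i))) /=.
  by apply: eq_bigl => S; rewrite !powersetE tog_sub.
move: E; under [in X in _ = X -> _]eq_bigr => S _ do rewrite hN.
rewrite sumrN => E; lra.
Qed.

Lemma fin_diff (R : realType) n (a b : 'I_n -> R) (T : {set 'I_n}) (p : {mpoly R[n]}) :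
  (msize p <= #|T|)%N ->
  \sum_(S in powerset T) (-1) ^+ #|S| * p.@[xv a b S] = 0.
Proof.
move=> Hs.
under eq_bigr => S _ do rewrite mevalE mulr_sumr.
rewrite exchange_big /=; apply: big1_seq => m /andP[_ mp].
have dm : (mdeg m < #|T|)%N by apply: leq_trans (msize_mdeg_lt mp) Hs.
have [i /andP[iT /eqP mi0] | H] := pickP [pred i | (i \in T) && (m i == 0%N)].
  apply: (pair_zero iT) => S.
  rewrite sign_tog mulNr; congr (- _); congr (_ * _); congr (_ * _).
  apply: eq_bigr => j _; case: (eqVneq j i) => [->|ji]; first by rewrite mi0 !expr0.
  by rewrite /xv in_tog.
exfalso; move: dm; rewrite ltnNge => /negP; apply.
rewrite mdegE (bigID (fun j => j \in T)) /= -sum1_card.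
apply: leq_trans (leq_addr _ _); apply: leq_sum => j jT.
by move: (H j); rewrite /= jT /=; case: (m j).
Qed.

Lemma vanish_all (R : realType) n (a b : 'I_n -> R) (k : nat) (p : {mpoly R[n]}) :
  (msize p <= k.+1)%N ->
  (forall S : {set 'I_n}, (#|S| <= k)%N -> p.@[xv a b S] = 0) ->
  forall T, p.@[xv a b T] = 0.
Proof.
move=> Hs H0 T; move: {2}#|T|.+1 (ltnSn #|T|) => N; elim: N T => // N IH T HT.
case: (leqP #|T| k) => Tk; first exact: H0.
have := fin_diff a b (leq_trans Hs Tk).
rewrite (bigD1 T) ?powersetE ?subxx //= big1 ?addr0.
  by move/eqP; rewrite mulf_eq0 signr_eq0 => /eqP.
move=> S /andP[]; rewrite powersetE => ST SnT.
rewrite IH ?mulr0 //; rewrite ltnS in HT; apply: leq_trans HT.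
by apply: proper_card; rewrite properEneq SnT.
Qed.

Lemma exists_sub n (A : {set 'I_n}) m : (m <= #|A|)%N ->
  exists S : {set 'I_n}, S \subset A /\ #|S| = m.
Proof.
elim: m => [|m IH] Hm; first by exists set0; rewrite sub0set cards0.
have [S [SA cS]] := IH (ltnW Hm).
have : (0 < #|A :\: S|)%N.
  have := cardsID S A; rewrite (setIidPr SA) cS; lia.
rewrite card_gt0 => /set0Pn [j]; rewrite inE => /andP[jS jA].
exists (j |: S); rewrite subUset sub1set jA SA cardsU1 jS cS; split => //.
Qed.

Lemma card_le (n k : nat) :
  #|[set A : {set 'I_n} | (#|A| <= k)%N]| = (\sum_(i < k.+1) 'C(n, i))%N.
Proof.
have D : forall i, #|[set A : {set 'I_n} | #|A| == i]| = 'C(n, i).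
  by move=> i; rewrite card_draws card_ord.
elim: k => [|k IH].
  rewrite big_ord1 -D; apply: eq_card => A.
  by rewrite !inE leqn0.
rewrite big_ord_recr /= -IH -D.
rewrite -(cardsID [set A : {set 'I_n} | (#|A| <= k)%N] [set A : {set 'I_n} | (#|A| <= k.+1)%N]); congr (_ + _)%N.
  apply: eq_card => A; rewrite !inE; case: (leqP #|A| k) => H; rewrite ?andbT ?andbF //; exact: ltnW.
apply: eq_card => A; rewrite !inE; case: (ltngtP #|A| k.+1) => H //=.
- by rewrite -ltnS H.
- by rewrite andbF.
- by rewrite H ltnn.
Qed.

Definition phi n (A : {set 'I_n}) : {ffun 'I_n -> bool} := [ffun j => j \in A].

Lemma phi_inj n : injective (@phi n).
Proof.
move=> A B e; apply/setP => j; have := congr1 (fun f : {ffun 'I_n -> bool} => f j) e.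
by rewrite /phi !ffunE.
Qed.

Lemma phi_supp n (u : {ffun 'I_n -> bool}) : phi [set j | u j] = u.
Proof. by apply/ffunP => j; rewrite ffunE inE. Qed.

Lemma box_xv (R : realType) n (a b : 'I_n -> R) (u : {ffun 'I_n -> bool}) :
  box_vertex a b u =1 xv a b [set j | u j].
Proof. by move=> j; rewrite /box_vertex /xv inE. Qed.

Definition lprod (R : realType) n (a : 'I_n -> R) (r : seq 'I_n) : {mpoly R[n]} :=
  \prod_(i <- r) ('X_i - (a i)%:MP).

Lemma lprod_eval (R : realType) n (a : 'I_n -> R) r y :
  (lprod a r).@[y] = \prod_(i <- r) (y i - a i).
Proof.
rewrite /lprod; elim: r => [|i r IH]; first by rewrite !big_nil meval1.
by rewrite !big_cons mevalM IH mevalB mevalXU mevalC.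
Qed.

Lemma lprod_size (R : realType) n (a b : 'I_n -> R) r :
  (forall i, a i < b i) -> (msize (lprod a r) <= (size r).+1)%N.
Proof.
move=> ab; elim: r => [|i r IH]; first by rewrite /lprod big_nil msize1.
have nz : forall s, lprod a s != 0.
  move=> s; apply/negP => /eqP e; have := lprod_eval a s b; rewrite e meval0.
  move/esym/eqP; rewrite prodf_seq_eq0 => /hasP [j _ /=].
  by rewrite subr_eq0 => /eqP bj; have := ab j; rewrite bj ltxx.
have nzf : 'X_i - (a i)%:MP != 0 :> {mpoly R[n]}.
  by have := nz [:: i]; rewrite /lprod big_seq1.
have sf : (msize ('X_i - (a i)%:MP : {mpoly R[n]}) <= 2)%N.
  apply: leq_trans (msizeD_le _ _) _; rewrite msizeN msizeX mdeg1 msizeC.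
  by rewrite geq_max leqnn; case: (_ != _).
rewrite /lprod big_cons msizeM //; last by have := nz r.
move: IH; rewrite /lprod /= => IH.
rewrite -subn1; apply: leq_trans (leq_sub2r 1 (leq_add sf IH)) _.
by rewrite !addSn subn1.
Qed.

Lemma supp_phi n (A : {set 'I_n}) : [set j | phi A j] = A.
Proof. by apply/setP => j; rewrite inE ffunE. Qed.

Lemma phiE n (A : {set 'I_n}) j : phi A j = (j \in A).
Proof. by rewrite ffunE. Qed.

Theorem theorem2 (R : realType) (n : nat) (a b : 'I_n -> R) (k : nat) :
  (1 <= n)%N -> (forall i, a i < b i) -> (k < n)%N ->
  exists U : {set {ffun 'I_n -> bool}},
    #|U| = (\sum_(i < k.+1) 'C(n, i))%N /\
    forall v : {ffun 'I_n -> bool}, v \notin U ->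
      deg_to_eq (fun x => exists2 u, u \in U & x = box_vertex a b u)
                (box_vertex a b v) k.
Proof.
move=> _ ab _.
exists (@phi n @: [set A : {set 'I_n} | (#|A| <= k)%N]); split.
  by rewrite card_imset ?card_le //; exact: phi_inj.
move=> v vU; set T := [set j | v j].
have Tk : (k < #|T|)%N.
  rewrite ltnNge; apply/negP => H; apply: (negP vU); rewrite -(phi_supp v).
  by apply: imset_f; rewrite inE.
split.
  move=> p Hp H0; rewrite (meval_eq _ (box_xv a b v)); apply: (vanish_all Hp) => S HS.
  rewrite -(supp_phi S) -(meval_eq _ (box_xv a b (phi S))); apply: H0.
  by exists (phi S) => //; apply: imset_f; rewrite inE.
move=> m Hm; rewrite leqNgt; apply/negP => km.
have [S [ST cS]] := exists_sub Tk.
have hs : (msize (lprod a (enum S)) <= m.+1)%N.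
  by apply: leq_trans (lprod_size (enum S) ab) _; rewrite -cardE cS.
have Hv : forall x, (exists2 u, u \in @phi n @: [set A : {set 'I_n} | (#|A| <= k)%N]
        & x = box_vertex a b u) -> (lprod a (enum S)).@[x] = 0.
  move=> _ [u /imsetP[A HA ->] ->]; rewrite lprod_eval; apply/eqP.
  rewrite prodf_seq_eq0; apply/hasP.
  have : ~~ (S \subset A).
    apply/negP => /subset_leq_card; rewrite cS; move: HA; rewrite inE; lia.
  case/subsetPn => j jS jA; exists j.
    by rewrite mem_enum.
  by rewrite /box_vertex phiE (negbTE jA) subrr eqxx.
have := Hm _ hs Hv.
move/eqP; rewrite lprod_eval prodf_seq_eq0 => /hasP [j].
rewrite mem_enum => jS; rewrite /box_vertex.
have : v j by have := subsetP ST j jS; rewrite inE.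
move=> -> /=; rewrite subr_eq0 => /eqP bj; have := ab j; rewrite bj ltxx.
done.
Qed.
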